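(* Let $\varepsilon,\delta>0$ and $s\ge1$ an integer. For $i\in[1:s]$ let $\rho^{(i)}\in\mathcal{D}(\mathcal{H})$ be a quantum state and $\Pi^{(i)}$ a projection operator on $\mathcal{H}$ such that $\mathrm{Tr}[\Pi^{(i)}\rho^{(i)}]\ge1-\varepsilon$. Then there exists a projection operator $\Pi^\star$ such that for all $i\in[1:s]$, $$\mathrm{Tr}[\Pi^\star\rho^{(i)}]\ge 1-\varepsilon-\delta\log(2s),$$ and $$\Pi^\star\preceq\left(\frac{2}{\delta^2}\right)^{\log(2s)}\left(\Pi^{(1)}+\Pi^{(2)}+\dots+\Pi^{(s)}\right).$$
   Context: $\mathcal{H}$ is a finite-dimensional Hilbert space, $\mathcal{D}(\mathcal{H})$ its set of density operators; $\log$ is base 2; $[1:s]=\{1,\dots,s\}$; $P\preceq Q$ means $Q-P$ is positive semi-definite. *)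

(* Defs.v *)
From HB Require Import structures.
From mathcomp Require Import all_boot all_order all_algebra.
From mathcomp Require Import sesquilinear.
From mathcomp Require Import complex.
From mathcomp Require Import reals exp.
Set Implicit Arguments. Unset Strict Implicit. Unset Printing Implicit Defensive.
Import Order.TTheory GRing.Theory Num.Theory.
Local Open Scope ring_scope.

Section QDefs.
Variable R : realType.
Local Notation C := (complex R).

Definition adj n (A : 'M[C]_n) : 'M[C]_n := map_mx Num.conj (A^T).

Definition psd n (A : 'M[C]_n) : Prop :=
  adj A = A /\ forall v : 'rV[C]_n, 0 <= (v *m A *m (map_mx Num.conj v^T)) 0 0.

Definition loewner_le n (P Q : 'M[C]_n) : Prop := psd (Q - P).

Definition density n (rho : 'M[C]_n) : Prop := psd rho /\ \tr rho = 1.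

Definition projection n (P : 'M[C]_n) : Prop := adj P = P /\ P *m P = P.

Definition log2 (x : R) : R := ln x / ln 2.

Definition rC (x : R) : C := real_complex R x.
End QDefs.

(* Main.v *)
Require Import Defs.
From HB Require Import structures.
From mathcomp Require Import all_boot all_order all_algebra.
From mathcomp Require Import complex.
From mathcomp Require Import reals exp.
From mathcomp Require Import sesquilinear spectral ring lra zify.
Set Implicit Arguments. Unset Strict Implicit. Unset Printing Implicit Defensive.
Import Order.TTheory GRing.Theory Num.Theory Num.Def.
Local Open Scope ring_scope.

Section Gen.
Variable C : numClosedFieldType.
Local Open Scope sesquilinear_scope.

Definition qf n (v : 'rV[C]_n) (A : 'M[C]_n) : C := (v *m A *m v^t*) 0 0.
Definition hpsd n (A : 'M[C]_n) : Prop := A^t* = A /\ forall v, 0 <= qf v A.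
Definition hproj n (P : 'M[C]_n) : Prop := P^t* = P /\ P *m P = P.

Lemma adjM m n p (A : 'M[C]_(m, n)) (B : 'M[C]_(n, p)) : (A *m B)^t* = B^t* *m A^t*.
Proof. by rewrite trmx_mul map_mxM. Qed.
Lemma adjD m n (A B : 'M[C]_(m, n)) : (A + B)^t* = A^t* + B^t*.
Proof. by rewrite linearD /= map_mxD. Qed.
Lemma adjN m n (A : 'M[C]_(m, n)) : (- A)^t* = - A^t*.
Proof. by rewrite linearN /= map_mxN. Qed.
Lemma adjB m n (A B : 'M[C]_(m, n)) : (A - B)^t* = A^t* - B^t*.
Proof. by rewrite adjD adjN. Qed.
Lemma adjZ m n a (A : 'M[C]_(m, n)) : (a *: A)^t* = conjC a *: A^t*.
Proof. by rewrite linearZ /= map_mxZ. Qed.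
Lemma adj1 n : (1%:M : 'M[C]_n)^t* = 1%:M.
Proof. by rewrite trmx1 map_mx1. Qed.
Lemma adj0 m n : (0 : 'M[C]_(m, n))^t* = 0.
Proof. by rewrite trmx0 map_mx0. Qed.
Lemma adj_sum n I (r : seq I) (F : I -> 'M[C]_n) : (\sum_(i <- r) F i)^t* = \sum_(i <- r) (F i)^t*.
Proof. by elim/big_rec2: _ => [|i x y _ <-]; rewrite ?adj0 ?adjD. Qed.
Lemma adj_diag n (d : 'rV[C]_n) : (diag_mx d)^t* = diag_mx (map_mx conjC d).
Proof. by rewrite tr_diag_mx map_diag_mx. Qed.

Lemma self_ge0 n (w : 'rV[C]_n) : 0 <= (w *m w^t*) 0 0.
Proof. rewrite mxE; apply: sumr_ge0 => k _; rewrite !mxE mul_conjC_ge0 //. Qed.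

Lemma qfD n v (A B : 'M[C]_n) : qf v (A + B) = qf v A + qf v B.
Proof. by rewrite /qf mulmxDr mulmxDl mxE. Qed.
Lemma qfN n v (A : 'M[C]_n) : qf v (- A) = - qf v A.
Proof. by rewrite /qf mulmxN mulNmx mxE. Qed.
Lemma qfB n v (A B : 'M[C]_n) : qf v (A - B) = qf v A - qf v B.
Proof. by rewrite qfD qfN. Qed.
Lemma qfZ n v a (A : 'M[C]_n) : qf v (a *: A) = a * qf v A.
Proof. by rewrite /qf -scalemxAr -scalemxAl mxE. Qed.
Lemma qf_congr n m v (B : 'M[C]_(n, m)) (A : 'M[C]_m) :
  qf v (B *m A *m B^t*) = qf (v *m B) A.
Proof. by rewrite /qf adjM !mulmxA. Qed.

Lemma psd_congr n m (B : 'M[C]_(n, m)) A : hpsd A -> hpsd (B *m A *m B^t*).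
Proof.
move=> [hA pA]; split; first by rewrite !adjM trmxCK hA mulmxA.
by move=> v; rewrite qf_congr.
Qed.
Lemma psdD n (A B : 'M[C]_n) : hpsd A -> hpsd B -> hpsd (A + B).
Proof.
move=> [hA pA] [hB pB]; split; first by rewrite adjD hA hB.
by move=> v; rewrite qfD addr_ge0.
Qed.
Lemma psd0 n : hpsd (0 : 'M[C]_n).
Proof. split; first exact: adj0. by move=> v; rewrite /qf mulmx0 mul0mx mxE. Qed.
Lemma psd_sum n I (r : seq I) (p : pred I) (F : I -> 'M[C]_n) :
  (forall i, hpsd (F i)) -> hpsd (\sum_(i <- r | p i) F i).
Proof. by move=> H; elim/big_rec: _ => [|i x _ Hx]; [exact: psd0 | exact: psdD]. Qed.
Lemma psdZ n a (A : 'M[C]_n) : 0 <= a -> hpsd A -> hpsd (a *: A).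
Proof.
move=> a0 [hA pA]; split; first by rewrite adjZ geC0_conj // hA.
by move=> v; rewrite qfZ mulr_ge0.
Qed.
Lemma proj_psd n (P : 'M[C]_n) : hproj P -> hpsd P.
Proof.
move=> [hP pP]; split=> // v.
have -> : qf v P = ((v *m P) *m (v *m P)^t*) 0 0.
  by rewrite /qf adjM hP !mulmxA -(mulmxA v P P) pP.
exact: self_ge0.
Qed.
Lemma proj_compl n (P : 'M[C]_n) : hproj P -> hproj (1%:M - P).
Proof.
move=> [hP pP]; split; first by rewrite adjB adj1 hP.
by rewrite mulmxBl !mulmxBr !mul1mx !mulmx1 pP subrr subr0.
Qed.

Lemma psd_diag n (d : 'rV[C]_n) : (forall j, 0 <= d 0 j) -> hpsd (diag_mx d).
Proof.
move=> d0; split.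
  rewrite adj_diag; congr diag_mx; apply/rowP => j; rewrite !mxE.
  by rewrite geC0_conj.
move=> v; rewrite /qf mul_mx_diag mxE; apply: sumr_ge0 => k _.
by rewrite !mxE mulrAC mulr_ge0 ?mul_conjC_ge0.
Qed.

Lemma qf_delta n (M : 'M[C]_n) j : qf (delta_mx 0 j) M = M j j.
Proof.
rewrite /qf -rowE mxE (bigD1 j) //= big1 ?addr0.
  by rewrite !mxE !eqxx /= conjC1 mulr1.
by move=> k kj; rewrite !mxE (negbTE kj) /= conjC0 mulr0.
Qed.

Lemma psd_diag_ge0 n (M : 'M[C]_n) j : hpsd M -> 0 <= M j j.
Proof. by move=> [_ pM]; rewrite -qf_delta. Qed.


Lemma herm_spectral n (A : 'M[C]_n) : A^t* = A -> exists (U : 'M[C]_n) (d : 'rV[C]_n),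
  U *m U^t* = 1%:M /\ U^t* *m U = 1%:M /\ A = U^t* *m diag_mx d *m U.
Proof.
move=> hA.
have nA : A \is normalmx by apply/normalmxP; rewrite hA.
have uU := spectral_unitarymx A.
exists (spectralmx A), (spectral_diag A).
have /unitarymxP e1 := uU.
split=> //; split; first exact: mulmx1C.
by move/orthomx_spectralP: nA; rewrite invmx_unitary.
Qed.

Lemma tr_psd_ge0 n (X Y : 'M[C]_n) : hpsd X -> hpsd Y -> 0 <= \tr (X *m Y).
Proof.
move=> pX pY; have [U [d [UU [UU' eY]]]] := herm_spectral pY.1.
have eD : U *m Y *m U^t* = diag_mx d.
  by rewrite eY !mulmxA UU mul1mx -mulmxA UU mulmx1.
have d0 : forall j, 0 <= d 0 j.
  by move=> j; have := psd_diag_ge0 j (psd_congr U pY); rewrite eD mxE eqxx mulr1n.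
have -> : \tr (X *m Y) = \tr ((U *m X *m U^t*) *m diag_mx d).
  by rewrite eY !mulmxA mxtrace_mulC !mulmxA.
rewrite mul_mx_diag /mxtrace; apply: sumr_ge0 => j _; rewrite mxE.
by rewrite mulr_ge0 // (psd_diag_ge0 j (psd_congr U pX)).
Qed.

Lemma tr_le n (X Y rho : 'M[C]_n) : hpsd rho -> hpsd (Y - X) ->
  \tr (X *m rho) <= \tr (Y *m rho).
Proof.
move=> pr pYX; rewrite -subr_ge0 -linearB /= -mulmxBl; exact: tr_psd_ge0.
Qed.


Lemma e00D (A B : 'M[C]_1) : (A + B) 0 0 = A 0 0 + B 0 0. Proof. by rewrite mxE. Qed.
Lemma e00N (A : 'M[C]_1) : (- A) 0 0 = - A 0 0. Proof. by rewrite mxE. Qed.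
Lemma e00B (A B : 'M[C]_1) : (A - B) 0 0 = A 0 0 - B 0 0. Proof. by rewrite e00D e00N. Qed.
Lemma e00Z a (A : 'M[C]_1) : (a *: A) 0 0 = a * A 0 0. Proof. by rewrite mxE. Qed.

Lemma adj_bound n (X : 'M[C]_n) a : 0 < a ->
  (forall u, qf u (X *m X^t*) <= a * qf u 1%:M) ->
  forall v, qf v (X^t* *m X) <= a * qf v 1%:M.
Proof.
move=> a0 H v; set w := v *m X^t*.
have ca : conjC a = a by rewrite geC0_conj // ltW.
have eN : qf v (X^t* *m X) = (w *m w^t*) 0 0 by rewrite /qf /w adjM trmxCK !mulmxA.
have eb : ((w *m X) *m v^t*) 0 0 = qf v (X^t* *m X) by rewrite /qf /w !mulmxA.
have eb' : (v *m (w *m X)^t*) 0 0 = qf v (X^t* *m X).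
  by rewrite /qf /w !adjM trmxCK !mulmxA.
have eww : qf w (X *m X^t*) = ((w *m X) *m (w *m X)^t*) 0 0.
  by rewrite /qf adjM !mulmxA.
have e1 : qf w 1%:M = (w *m w^t*) 0 0 by rewrite /qf mulmx1.
have e1' : qf v 1%:M = (v *m v^t*) 0 0 by rewrite /qf mulmx1.
have Hw := H w; rewrite eww e1 -eN in Hw.
have h1 := self_ge0 (w *m X - a *: v).
rewrite adjB adjZ ca mulmxBl !mulmxBr -!scalemxAl -!scalemxAr !e00B !e00Z in h1.
rewrite eb eb' -e1' in h1.
set N := qf v (X^t* *m X) in Hw h1 *; set M := qf v 1%:M in h1 *.
set P := ((w *m X) *m (w *m X)^t*) 0 0 in Hw h1.
have h2 : 0 <= a * (a * M - N).
  apply: le_trans h1 _; rewrite -subr_ge0.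
  have -> : a * (a * M - N) - (P - a * N - (a * N - a * (a * M))) = a * N - P by ring.
  by rewrite subr_ge0.
by rewrite -subr_ge0; rewrite pmulr_rge0 in h2.
Qed.


Lemma psd_spectral n (A : 'M[C]_n) : hpsd A -> exists (U : 'M[C]_n) (d : 'rV[C]_n),
  [/\ U *m U^t* = 1%:M, U^t* *m U = 1%:M, A = U^t* *m diag_mx d *m U & forall j, 0 <= d 0 j].
Proof.
move=> pA; have [U [d [UU [UU' eA]]]] := herm_spectral pA.1.
exists U, d; split=> // j.
have eD : U *m A *m U^t* = diag_mx d.
  by rewrite eA !mulmxA UU mul1mx -mulmxA UU mulmx1.
by have := psd_diag_ge0 j (psd_congr U pA); rewrite eD mxE eqxx mulr1n.
Qed.

Section Md.
Variables (n : nat) (U : 'M[C]_n).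
Hypothesis UU : U *m U^t* = 1%:M.
Hypothesis UU' : U^t* *m U = 1%:M.
Definition Md (a : 'rV[C]_n) := U^t* *m diag_mx a *m U.

Lemma Md_mul (a b : 'rV[C]_n) : Md a *m Md b = Md (\row_j (a 0 j * b 0 j)).
Proof.
rewrite /Md -!mulmxA (mulmxA U) UU mul1mx (mulmxA (diag_mx a)) mulmx_diag.
by rewrite !mulmxA.
Qed.
Lemma Md_add (a b : 'rV[C]_n) : Md a + Md b = Md (a + b).
Proof. by rewrite /Md raddfD /= mulmxDr mulmxDl. Qed.
Lemma Md_opp (a : 'rV[C]_n) : - Md a = Md (- a).
Proof. by rewrite /Md raddfN /= mulmxN mulNmx. Qed.
Lemma Md_sub (a b : 'rV[C]_n) : Md a - Md b = Md (a - b).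
Proof. by rewrite Md_opp Md_add. Qed.
Lemma Md_scale c (a : 'rV[C]_n) : c *: Md a = Md (c *: a).
Proof. by rewrite /Md linearZ /= -scalemxAr -scalemxAl. Qed.
Lemma Md_one : Md (const_mx 1) = 1%:M.
Proof. by rewrite /Md diag_const_mx mulmx1 UU'. Qed.
Lemma Md_psd (a : 'rV[C]_n) : (forall j, 0 <= a 0 j) -> hpsd (Md a).
Proof. by move=> a0; have := psd_congr (U^t*) (psd_diag a0); rewrite trmxCK. Qed.
Lemma Md_herm (a : 'rV[C]_n) : (forall j, conjC (a 0 j) = a 0 j) -> (Md a)^t* = Md a.
Proof.
move=> ca; rewrite /Md !adjM trmxCK adj_diag mulmxA; congr (_ *m _ *m _).
by congr diag_mx; apply/rowP => j; rewrite mxE ca.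
Qed.
Lemma Md_proj (a : 'rV[C]_n) : (forall j, conjC (a 0 j) = a 0 j) -> (forall j, a 0 j * a 0 j = a 0 j) ->
  hproj (Md a).
Proof.
move=> ca aa; split; first exact: Md_herm.
by rewrite Md_mul; congr Md; apply/rowP => j; rewrite mxE aa.
Qed.
End Md.


Lemma qf_le n (X Y : 'M[C]_n) u : hpsd (Y - X) -> qf u X <= qf u Y.
Proof. by move=> [_ p]; rewrite -subr_ge0 -qfB. Qed.

Lemma sandwich_compl n (R P : 'M[C]_n) : R *m R = R ->
  R - R *m (1%:M - P) *m R = R *m P *m R.
Proof. by move=> RR; rewrite mulmxBr mulmx1 mulmxBl RR opprB addrC subrK. Qed.

Lemma bil_tr n (Q X Y r : 'M[C]_n) a b c f :
  \tr (Q *m (a *: X + b *: Y) *m r *m (c *: X + f *: Y)) =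
  a * c * \tr (Q *m X *m r *m X) + a * f * \tr (Q *m X *m r *m Y)
  + b * c * \tr (Q *m Y *m r *m X) + b * f * \tr (Q *m Y *m r *m Y).
Proof.
rewrite !(mulmxDr, mulmxDl) -!scalemxAr -!scalemxAl -?scalemxAr !linearD !linearZ /=.
ring.
Qed.

Lemma key n s (rho Pi : 'I_s -> 'M[C]_n) (al t e : C) :
  0 < al -> 0 < t -> (forall i, hpsd (rho i) /\ \tr (rho i) = 1) ->
  (forall i, hproj (Pi i)) ->
  (forall i, 1 - e <= \tr (Pi i *m rho i)) ->
  exists P : 'M[C]_n, [/\ hproj P,
    (forall i, 1 - ((1 + t) * al + (1 + t) / t * e) <= \tr (P *m rho i)) &
    hpsd (al^-1 *: \sum_i Pi i - P)].
Proof.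
move=> al0 t0 Hrho HPi He.
set A := \sum_i Pi i.
have pA : hpsd A by apply: psd_sum => i; apply: proj_psd.
have [U [d [UU UU' eA d0]]] := psd_spectral pA.
have ral : conjC al = al by rewrite geC0_conj // ltW.
have rt : conjC t = t by rewrite geC0_conj // ltW.
set e1 := \row_j (if al <= d 0 j then 1 else 0 : C).
set f1 := \row_j (if al <= d 0 j then 0 else 1 : C).
have eAM : A = Md U d by [].
set P := Md U e1.
have hP : hproj P.
  by apply: Md_proj => // j; rewrite mxE; case: ifP => _;
    rewrite ?conjC0 ?conjC1 ?mulr0 ?mulr1.
have eQ : 1%:M - P = Md U f1.
  rewrite -(Md_one UU') Md_sub; congr Md; apply/rowP => j; rewrite !mxE.
  by case: ifP => _; rewrite ?subrr ?subr0.
set Q := 1%:M - P.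
have hQ : hproj Q := proj_compl hP.
have pQ := proj_psd hQ.
exists P; split => //; last first.
  rewrite eAM Md_scale Md_sub; apply: Md_psd => j; rewrite !mxE.
  case: ifP => h.
    rewrite subr_ge0 -[X in X <= _](mulVf (lt0r_neq0 al0)) ler_wpM2l //.
    by rewrite invr_ge0 ltW.
  by rewrite subr0 mulr_ge0 // invr_ge0 ltW.
have hQA : hpsd (al *: Q - Q *m A *m Q).
  rewrite /Q eQ eAM !(Md_mul UU) Md_scale Md_sub; apply: Md_psd => j; rewrite !mxE.
  case: ifP => h; first by rewrite mulr0 !mul0r subrr.
  rewrite mulr1 mul1r mulr1 subr_ge0; apply: ltW.
  by rewrite real_ltNge ?h ?(ger0_real (d0 j)) ?(gtr0_real al0).
have hPl : hpsd (al%:M - al *: Q).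
  have -> : al%:M - al *: Q = al *: P by rewrite /Q scalerBr scalemx1 opprB addrC subrK.
  exact: psdZ (ltW al0) (proj_psd hP).
move=> i.
have [pr tr1] := Hrho i.
have [hPi pPi] := HPi i.
set Pp := 1%:M - Pi i.
have hPp : hproj Pp := proj_compl (HPi i).
have pAPi : hpsd (A - Pi i).
  rewrite /A (bigD1 i) //= addrC addrK; apply: psd_sum => j; exact: proj_psd.
have hX : hpsd (al%:M - Pi i *m Q *m Pi i).
  set X := Q *m Pi i.
  have eXX : X *m X^t* = Q *m Pi i *m Q.
    by rewrite /X adjM hPi hQ.1 mulmxA -(mulmxA Q) pPi.
  have eXX' : X^t* *m X = Pi i *m Q *m Pi i.
    by rewrite /X adjM hPi hQ.1 mulmxA -(mulmxA (Pi i) Q Q) hQ.2.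
  split.
    by rewrite -[al%:M]scalemx1 adjB adjZ adj1 ral !adjM hPi hQ.1 mulmxA.
  move=> u; rewrite qfB subr_ge0 -eXX'.
  have -> : qf u al%:M = al * qf u 1%:M by rewrite -[al%:M]scalemx1 qfZ.
  apply: (adj_bound al0) => w; rewrite eXX.
  have h1 : hpsd (Q *m A *m Q - Q *m Pi i *m Q).
    rewrite -mulmxBl -mulmxBr; have := psd_congr Q pAPi; by rewrite hQ.1.
  apply: le_trans (qf_le w h1) _.
  apply: le_trans (qf_le w hQA) _.
  apply: le_trans (qf_le w hPl) _.
  by rewrite -[al%:M]scalemx1 qfZ.
set x := \tr (Q *m Pi i *m rho i *m Pi i).
set y := \tr (Q *m Pi i *m rho i *m Pp).
set y' := \tr (Q *m Pp *m rho i *m Pi i).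
set z := \tr (Q *m Pp *m rho i *m Pp).
have bil : forall a b c f, \tr (Q *m (a *: Pi i + b *: Pp) *m rho i *m (c *: Pi i + f *: Pp))
    = a * c * x + a * f * y + b * c * y' + b * f * z.
  by move=> a b c f; rewrite bil_tr.
have e1' : 1 *: Pi i + 1 *: Pp = 1%:M by rewrite !scale1r /Pp addrC subrK.
have trQ : \tr (Q *m rho i) = x + y + y' + z.
  by have := bil 1 1 1 1; rewrite e1' !mulmx1 !mulr1 !mul1r.
have hB : 0 <= t * t * x - t * y - t * y' + z.
  have -> : t * t * x - t * y - t * y' + z = 
     \tr (Q *m (t *: Pi i + (-1) *: Pp) *m rho i *m (t *: Pi i + (-1) *: Pp)).
    by rewrite bil; ring.
  set B := t *: Pi i + (-1) *: Pp.
  have hB : B^t* = B by rewrite /B adjD !adjZ rt hPi hPp.1 rmorphN1.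
  have := tr_psd_ge0 pQ (psd_congr B pr).
  by rewrite hB !mulmxA.
have hx : x <= al.
  rewrite /x mxtrace_mulC !mulmxA.
  apply: le_trans (tr_le pr hX) _.
  by rewrite mul_scalar_mx linearZ /= tr1 mulr1.
have hz : z <= e.
  rewrite /z mxtrace_mulC !mulmxA.
  have h2 : hpsd (Pp - Pp *m Q *m Pp).
    have -> : Pp - Pp *m Q *m Pp = Pp *m P *m Pp.
      exact: sandwich_compl hPp.2.
    by have := psd_congr Pp (proj_psd hP); rewrite hPp.1.
  apply: le_trans (tr_le pr h2) _.
  rewrite /Pp mulmxBl mul1mx linearB /= tr1.
  rewrite -subr_ge0; have -> : e - (1 - \tr (Pi i *m rho i)) = \tr (Pi i *m rho i) - (1 - e) by ring.
  by rewrite subr_ge0.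
have -> : P = 1%:M - Q by rewrite /Q opprB addrC subrK.
rewrite mulmxBl mul1mx linearB /= tr1 trQ lerD2l lerN2.
have tn0 : t != 0 by rewrite lt0r_neq0.
apply: (@le_trans _ _ ((1 + t) * x + (1 + t) / t * z)).
  rewrite -subr_ge0.
  have -> : (1 + t) * x + (1 + t) / t * z - (x + y + y' + z) =
     t^-1 * (t * t * x - t * y - t * y' + z) by field.
  by rewrite mulr_ge0 // invr_ge0 ltW.
have t1 : 0 <= 1 + t by rewrite addr_ge0 // ltW.
by rewrite lerD // ler_wpM2l // divr_ge0 // ltW.
Qed.

End Gen.

Theorem lemma3 (R : realType) (n s : nat) (eps delta : R)
    (rho Pi : 'I_s -> 'M[complex R]_n) :
  0 < eps -> 0 < delta -> (1 <= s)%N ->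
  (forall i, density (rho i)) ->
  (forall i, projection (Pi i)) ->
  (forall i, rC (1 - eps) <= \tr (Pi i *m rho i)) ->
  exists PiS : 'M[complex R]_n,
    projection PiS /\
    (forall i, rC (1 - eps - delta * log2 (2 * s%:R)) <= \tr (PiS *m rho i)) /\
    loewner_le PiS
      (rC (powR (2 / delta ^+ 2) (log2 (2 * s%:R))) *: \sum_(i < s) Pi i).
Proof.
move=> eps0 del0 s1 Hrho HPi Htr.
have Hrho' : forall i, hpsd (rho i) /\ \tr (rho i) = 1 by move=> i; exact: Hrho i.
have HPi' : forall i, hproj (Pi i) by move=> i; exact: HPi i.
have pA : hpsd (\sum_i Pi i) by apply: psd_sum => i; apply: proj_psd.
set L := log2 (2 * s%:R).
set a := 2 / delta ^+ 2.
set c := powR a L.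
have ln2 : 0 < ln (2:R) by apply: ln_gt0; lra.
have hs1 : (1 <= s%:R :> R) by rewrite ler1n.
have L1 : 1 <= L.
  rewrite /L /log2 ler_pdivlMr // mul1r ler_ln ?posrE; lra.
have dL : delta <= delta * L.
  by nra.
case: (lerP (1 - eps - delta * L) 0) => hA.
  exists 0; split; [split|split].
  - by rewrite /adj trmx0 map_mx0.
  - by rewrite mulmx0.
  - by move=> i; rewrite mul0mx linear0 /rC lecE /= eqxx hA.
  rewrite /loewner_le subr0; apply: psdZ pA.
  by rewrite /rC lecE /= eqxx powR_ge0.
have d1 : delta < 1 by lra.
have e1 : eps < 1 by lra.
have a1 : 1 <= a.
  rewrite /a ler_pdivlMr ?exprn_gt0 // mul1r.
  by apply: le_trans (exprn_ile1 2 (ltW del0) (ltW d1)) _; lra.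
case: (ltnP 1 s) => hs2; last first.
  have es : s = 1%N by apply/eqP; rewrite eqn_leq hs2 s1.
  have L_1 : L = 1 by rewrite /L /log2 es mulr1 divff // lt0r_neq0.
  pose j0 : 'I_s := Ordinal s1.
  have allj : forall i : 'I_s, i = j0.
    by move=> i; apply: val_inj => /=; have := ltn_ord i; lia.
  exists (Pi j0); split; first exact: HPi j0.
  split.
    move=> i; rewrite (allj i); apply: le_trans (Htr j0); rewrite /rC lecR.
    rewrite L_1 mulr1; lra.
  have eS : \sum_(i < s) Pi i = Pi j0.
    by apply: big_pred1 => i; rewrite /= (allj i) eqxx.
  rewrite /loewner_le eS.
  have -> : rC c *: Pi j0 - Pi j0 = rC (c - 1) *: Pi j0.
    by rewrite /rC rmorphB /= rmorph1 scalerBl scale1r.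
  apply: psdZ; last exact: proj_psd.
  rewrite /rC lecE /= eqxx subr_ge0 /c L_1 powRr1 //.
  exact: le_trans ler01 a1.
have hs : (2 <= s%:R :> R) by rewrite ler_nat.
have L2 : 2 <= L.
  rewrite /L /log2 ler_pdivlMr //.
  have -> : 2 * ln (2:R) = ln (2 * 2) by rewrite lnM ?posrE //; lra.
  rewrite ler_ln ?posrE; lra.
have ca : a ^+ 2 <= c.
  rewrite /c -powR_mulrn; first exact: ler_powR.
  exact: le_trans ler01 a1.
have a2 : 0 < a ^+ 2 by rewrite exprn_gt0 // (lt_le_trans ltr01 a1).
have c0 : 0 < c by apply: lt_le_trans ca.
set k := c^-1.
have k0 : 0 < k by rewrite invr_gt0.
have kle : k <= delta ^+ 4 / 4.
  have -> : delta ^+ 4 / 4 = (a ^+ 2)^-1 by rewrite /a; field; rewrite lt0r_neq0.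
  by rewrite /k lef_pV2 ?posrE.
have [P [hP htr hle]] := key (rho := rho) (Pi := Pi) (al := rC k) (t := rC delta^-1)
    (e := rC eps) (ltac:(by rewrite /rC ltcR)) 
    (ltac:(by rewrite /rC ltcR invr_gt0)) Hrho' HPi'
    (ltac:(by move=> i; have := Htr i; rewrite /rC /= rmorphB rmorph1)).
exists P; split; first exact: hP.
split.
  move=> i; apply: le_trans (htr i).
  have -> : 1 - ((1 + rC delta^-1) * rC k + (1 + rC delta^-1) / rC delta^-1 * rC eps) =
            rC (1 - ((1 + delta^-1) * k + (1 + delta^-1) / delta^-1 * eps)).
    rewrite /rC /= !(rmorphB, rmorphD, rmorphM, rmorph1, fmorph_div, fmorphV).
    reflexivity.
  rewrite /rC lecR.
  have hd0 : delta != 0 by rewrite lt0r_neq0.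
  have -> : (1 + delta^-1) / delta^-1 = delta + 1 by field; exact: hd0.
  have h1 : (1 + delta^-1) * k <= (delta ^+ 4 + delta ^+ 3) / 4.
    apply: le_trans (ler_wpM2l _ kle) _; first by rewrite addr_ge0 // invr_ge0 ltW.
    by rewrite le_eqVlt; apply/orP; left; apply/eqP; field; exact: hd0.
  have h4 : delta ^+ 4 <= delta.
    by have := ler_wiXn2l (ltW del0) (ltW d1) (isT : (1 <= 4)%N); rewrite expr1.
  have h3 : delta ^+ 3 <= delta.
    by have := ler_wiXn2l (ltW del0) (ltW d1) (isT : (1 <= 3)%N); rewrite expr1.
  have h5 : delta * eps <= delta by nra.
  have h6 : 2 * delta <= delta * L by nra.
  have -> : (delta + 1) * eps = delta * eps + eps by ring.
  lra.
move: hle; rewrite /loewner_le /k /rC fmorphV /= invrK.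
by [].
Qed.
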